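(* Let $N(n)=|\{w\in\mathcal{L}: |w|\le n\}|$ be the number of consistent outcome words of length at most $n$. Then there are constants $0<c_1\le c_2$ such that $c_1 n\le \log_2 N(n)\le c_2 n$ for all $n\ge 1$. In particular the number of binary hidden variables needed to determine all possible outcome sequences of length up to $n$ grows linearly in $n$, i.e. of the same order as $\log_2|\{w\in\tilde\Sigma^*:|w|\le n\}|$.
   Context: Let $\Sigma=\{A,B,C,a,b,c,\alpha,\beta,\gamma\}$ be nine observables arranged in a $3\times 3$ square with rows $(A,B,C)$, $(a,b,c)$, $(\alpha,\beta,\gamma)$. The six \emph{contexts} are the three rows $\{A,B,C\},\{a,b,c\},\{\alpha,\beta,\gamma\}$ and the three columns $\{A,a,\alpha\},\{B,b,\beta\},\{C,c,\gamma\}$. Each context has a sign: $-1$ for $\{C,c,\gamma\}$ and $+1$ for the other five. Two distinct observables are \emph{compatible} if they lie in a common context, and \emph{incompatible} otherwise. Let $\tilde\Sigma=\{X,\tilde X: X\in\Sigma\}$ (18 letters); the letter $X$ means ''observable $X$ measured with value $1$'' and $\tilde X$ means ''$X$ measured with value $-1$''. For a word $w=t_1\cdots t_m\in\tilde\Sigma^*$ define inductively partial assignments $v_0,\dots,v_m:\Sigma\rightharpoonup\{1,-1\}$ (an observable in $\mathrm{dom}(v_i)$ is \emph{determined} after step $i$, with value $v_i(X)$), and whether $w$ is consistent: $v_0$ is the empty assignment. Given $v_{i-1}$, let $t_i$ record observable $X$ with value $\varepsilon$. If $X\in\mathrm{dom}(v_{i-1})$ and $v_{i-1}(X)\ne\varepsilon$,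 then $w$ is \emph{inconsistent}. Otherwise let $u$ be the restriction of $v_{i-1}$ to observables that are equal to or compatible with $X$, extended by $u(X)=\varepsilon$; then $v_i$ is obtained from $u$ by repeatedly doing the following until nothing changes: whenever a context has exactly two of its observables in the domain, assign the third observable the value making the product of the three values equal to the sign of that context. The word $w$ is \emph{consistent} if no step is inconsistent; $\mathcal{L}$ is the set of consistent words (it contains the empty word). *)

(* Defs.v *)
From Stdlib Require Import Bool List Arith ZArith Reals.
Import ListNotations.

(** The nine observables of the 3x3 (Mermin-Peres) square:
    rows (A,B,C), (a,b,c), (alpha,beta,gamma). *)
Inductive obs : Set :=
  | oA | oB | oC | oa | ob | oc | oal | obe | oga.

Scheme Equality for obs.

Definition all_obs : list obs := [oA; oB; oC; oa; ob; oc; oal; obe; oga].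

Definition contexts : list (obs * obs * obs * Z) :=
  [ (oA, oB, oC, 1%Z); (oa, ob, oc, 1%Z); (oal, obe, oga, 1%Z);
    (oA, oa, oal, 1%Z); (oB, ob, obe, 1%Z); (oC, oc, oga, (-1)%Z) ].

Definition in_ctx (X : obs) (k : obs * obs * obs * Z) : bool :=
  let '(x, y, z, _) := k in obs_beq X x || obs_beq X y || obs_beq X z.

Definition compatible (X Y : obs) : bool :=
  negb (obs_beq X Y) &&
  existsb (fun k => in_ctx X k && in_ctx Y k) contexts.

(** Letters of the 18-letter alphabet: [Plus X] is "X measured with value 1",
    [Minus X] is "X measured with value -1" (the letter X-tilde). *)
Inductive letter : Set :=
  | Plus : obs -> letter
  | Minus : obs -> letter.

Definition all_letters : list letter := map Plus all_obs ++ map Minus all_obs.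

Definition letter_obs (t : letter) : obs :=
  match t with Plus X => X | Minus X => X end.
Definition letter_val (t : letter) : Z :=
  match t with Plus _ => 1%Z | Minus _ => (-1)%Z end.

(** Partial assignments Sigma -> {1,-1}; [None] = undetermined. *)
Definition assignment := obs -> option Z.

Definition empty_asg : assignment := fun _ => None.

Definition update (v : assignment) (X : obs) (e : Z) : assignment :=
  fun Y => if obs_beq Y X then Some e else v Y.

(** One propagation step: find the first context having exactly two of its
    observables determined and assign the third the value making the product
    equal to the sign of the context (third = sign * a * b since a,b = +-1). *)
Definition fire (v : assignment) (k : obs * obs * obs * Z) : option (obs * Z) :=
  let '(x, y, z, s) := k in
  match v x, v y, v z with
  | Some a, Some b, None => Some (z, (s * a * b)%Z)
  | Some a, None, Some c => Some (y, (s * a * c)%Z)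
  | None, Some b, Some c => Some (x, (s * b * c)%Z)
  | _, _, _ => None
  end.

Fixpoint first_fire (v : assignment) (ks : list (obs * obs * obs * Z))
  : option (obs * Z) :=
  match ks with
  | [] => None
  | k :: ks' => match fire v k with
                | Some r => Some r
                | None => first_fire v ks'
                end
  end.

Definition prop_step (v : assignment) : assignment :=
  match first_fire v contexts with
  | Some (X, e) => update v X e
  | None => v
  end.

(** Each effective step determines one more observable, so after 9 steps
    nothing changes any more: this is the closure ("repeat until nothing
    changes"). *)
Definition closure (v : assignment) : assignment := Nat.iter 9 prop_step v.

Definition step (v : assignment) (t : letter) : option assignment :=
  let X := letter_obs t in
  let e := letter_val t in
  match v X with
  | Some e' => if Z.eqb e' e then
                 Some (closure (update (fun Y => if obs_beq Y X || compatible X Y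
                                                 then v Y else None) X e))
               else None
  | None => Some (closure (update (fun Y => if obs_beq Y X || compatible X Y
                                            then v Y else None) X e))
  end.

Fixpoint run_from (v : assignment) (w : list letter) : option assignment :=
  match w with
  | [] => Some v
  | t :: w' => match step v t with
               | Some v' => run_from v' w'
               | None => None
               end
  end.

Definition consistent (w : list letter) : bool :=
  match run_from empty_asg w with Some _ => true | None => false end.

Fixpoint words (k : nat) : list (list letter) :=
  match k with
  | O => [[]]
  | S k' => flat_map (fun t => map (cons t) (words k')) all_letters
  end.

Definition Ncons (n : nat) : nat :=
  fold_right plus 0 (map (fun k => length (filter consistent (words k))) (seq 0 (S n))).

Definition log2R (x : R) : R := (ln x / ln 2)%R.

Example ex1 : consistent [Plus oA; Plus oB; Minus oC] = false. Proof. reflexivity. Qed.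
Example ex2 : consistent [Plus oA; Plus oB; Plus oC; Minus oA] = false. Proof. reflexivity. Qed.
Example ex3 : consistent [Plus oA; Plus oB; Plus ob; Minus oA] = true. Proof. reflexivity. Qed.
Example ex4 : Ncons 1 = 19%nat /\ Ncons 0 = 1%nat. Proof. split; vm_compute; reflexivity. Qed.

(* Main.v *)
Require Import Defs.
From Stdlib Require Import Reals.
From Stdlib Require Import List Arith Lia Lra FunctionalExtensionality.
Import ListNotations.
Open Scope R_scope.

Definition okw (v : assignment) (w : list letter) : bool :=
  match run_from v w with Some _ => true | None => false end.

Definition cnt (v : assignment) (k : nat) : nat := length (filter (okw v) (words k)).

Lemma filter_map_cons (p : list letter -> bool) t W :
  length (filter p (map (cons t) W)) = length (filter (fun w => p (t :: w)) W).
Proof. induction W as [|w W IH]; simpl; auto. destruct (p (t :: w)); simpl; auto. Qed.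

Lemma filter_flat (p : list letter -> bool) W L :
  length (filter p (flat_map (fun t => map (cons t) W) L)) =
  fold_right plus 0%nat (map (fun t => length (filter (fun w => p (t :: w)) W)) L).
Proof.
  induction L as [|t L IH]; simpl; auto.
  rewrite filter_app, length_app, IH, filter_map_cons. reflexivity.
Qed.

Lemma step_some v t v' W : step v t = Some v' ->
  length (filter (fun w => okw v (t :: w)) W) = length (filter (okw v') W).
Proof.
  intros H. induction W as [|w W IH]; simpl; auto.
  unfold okw at 1; simpl; rewrite H. fold (okw v' w).
  destruct (okw v' w); simpl; auto.
Qed.

Definition sA1 : assignment := fun Y => if obs_beq Y oA then Some 1%Z else None.
Definition sAm : assignment := fun Y => if obs_beq Y oA then Some (-1)%Z else None.
Definition sB1 : assignment := fun Y => if obs_beq Y ob then Some 1%Z else None.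
Definition sBm : assignment := fun Y => if obs_beq Y ob then Some (-1)%Z else None.

Ltac stepc := unfold step; cbn -[closure compatible]; f_equal; apply functional_extensionality; intros Y; destruct Y; vm_compute; reflexivity.

Lemma e1 : step sB1 (Plus oA) = Some sA1. Proof. stepc. Qed.
Lemma e2 : step sB1 (Minus oA) = Some sAm. Proof. stepc. Qed.
Lemma e3 : step sBm (Plus oA) = Some sA1. Proof. stepc. Qed.
Lemma e4 : step sBm (Minus oA) = Some sAm. Proof. stepc. Qed.
Lemma e5 : step sA1 (Plus ob) = Some sB1. Proof. stepc. Qed.
Lemma e6 : step sA1 (Minus ob) = Some sBm. Proof. stepc. Qed.
Lemma e7 : step sAm (Plus ob) = Some sB1. Proof. stepc. Qed.
Lemma e8 : step sAm (Minus ob) = Some sBm. Proof. stepc. Qed.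
Lemma e9 : step empty_asg (Plus oA) = Some sA1. Proof. stepc. Qed.
Lemma e10 : step empty_asg (Minus oA) = Some sAm. Proof. stepc. Qed.

Lemma cnt_S v k : cnt v (S k) =
  fold_right plus 0%nat (map (fun t => length (filter (fun w => okw v (t :: w)) (words k))) all_letters).
Proof. unfold cnt. change (words (S k)) with (flat_map (fun t => map (cons t) (words k)) all_letters). apply filter_flat. Qed.

Lemma cnt0 v : cnt v 0 = 1%nat.
Proof. reflexivity. Qed.

Lemma lower_states k :
  (2 ^ k <= cnt sA1 k /\ 2 ^ k <= cnt sAm k /\ 2 ^ k <= cnt sB1 k /\ 2 ^ k <= cnt sBm k)%nat.
Proof.
  induction k as [|k IH].
  - rewrite !cnt0; simpl; lia.
  - destruct IH as (H1 & H2 & H3 & H4).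
    rewrite !cnt_S. simpl map. simpl fold_right.
    rewrite (step_some _ _ _ _ e1), (step_some _ _ _ _ e2), (step_some _ _ _ _ e3),
      (step_some _ _ _ _ e4), (step_some _ _ _ _ e5), (step_some _ _ _ _ e6),
      (step_some _ _ _ _ e7), (step_some _ _ _ _ e8).
    fold (cnt sA1 k) (cnt sAm k) (cnt sB1 k) (cnt sBm k).
    rewrite Nat.pow_succ_r'. lia.
Qed.

Lemma lower_empty n : (2 ^ n <= cnt empty_asg n)%nat.
Proof.
  destruct n as [|n]. - rewrite cnt0; simpl; lia.
  - rewrite cnt_S. simpl map. simpl fold_right.
    rewrite (step_some _ _ _ _ e9), (step_some _ _ _ _ e10).
    fold (cnt sA1 n) (cnt sAm n).
    destruct (lower_states n) as (H1 & H2 & _). rewrite Nat.pow_succ_r'. lia.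
Qed.

Lemma fold_ge a l : (a <= fold_right plus a l)%nat.
Proof. induction l; simpl; lia. Qed.

Lemma Ncons_ge n : (2 ^ n <= Ncons n)%nat.
Proof.
  eapply Nat.le_trans; [apply lower_empty|].
  unfold Ncons. rewrite seq_S, map_app, fold_right_app. simpl.
  eapply Nat.le_trans; [|apply fold_ge]. unfold cnt, consistent, okw. lia.
Qed.

Lemma length_flat (W : list (list letter)) L :
  length (flat_map (fun t => map (cons t) W) L) = (length L * length W)%nat.
Proof. induction L; simpl; auto. rewrite length_app, length_map, IHL. lia. Qed.

Lemma words_len k : length (words k) = (18 ^ k)%nat.
Proof. induction k; [reflexivity|]. change (words (S k)) with (flat_map (fun t => map (cons t) (words k)) all_letters). rewrite length_flat, IHk. reflexivity. Qed.

Lemma sum_bound n : (1 <= n)%nat -> forall g : nat -> nat, (forall k, g k <= 18 ^ k)%nat ->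
  (fold_right plus 0%nat (map g (seq 0 (S n))) <= 19 ^ n)%nat.
Proof.
  intros Hn g Hg. induction n as [|n IH]; [lia|].
  destruct n as [|n].
  - simpl. pose proof (Hg 0%nat); pose proof (Hg 1%nat); simpl in *; lia.
  - rewrite seq_S, map_app, fold_right_app. simpl (fold_right plus 0%nat [g _]).
    assert (Hf : forall l a, fold_right plus a l = (a + fold_right plus 0 l)%nat).
    { induction l; simpl; intros; [lia|]. rewrite IHl. lia. }
    rewrite Hf. specialize (IH ltac:(lia)).
    pose proof (Hg (0 + S (S n))%nat).
    assert ((18 ^ S (S n) <= 18 * 19 ^ S n)%nat).
    { rewrite (Nat.pow_succ_r' 18). apply Nat.mul_le_mono_l. apply Nat.pow_le_mono_l. lia. }
    rewrite (Nat.pow_succ_r' 19 (S n)). rewrite Nat.add_0_l in *. cbn [map fold_right]. lia.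
Qed.

Lemma Ncons_le n : (1 <= n)%nat -> (Ncons n <= 19 ^ n)%nat.
Proof.
  intros Hn. unfold Ncons. apply sum_bound; auto.
  intros k. rewrite <- words_len. apply filter_length_le.
Qed.

Lemma my_ln_le x y : 0 < x -> x <= y -> ln x <= ln y.
Proof. intros Hx Hxy. destruct (Rle_lt_or_eq_dec _ _ Hxy) as [h|h].
  - left; apply ln_increasing; auto. - subst; lra. Qed.

Theorem mainTheorem6 :
  exists c1 c2 : R, 0 < c1 /\ c1 <= c2 /\
    forall n : nat, (1 <= n)%nat ->
      c1 * INR n <= log2R (INR (Ncons n)) <= c2 * INR n.
Proof.
  assert (Hl2 : 0 < ln 2) by (rewrite <- ln_1; apply ln_increasing; lra).
  assert (H219 : ln 2 <= ln 19) by (apply Rlt_le, ln_increasing; lra).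
  exists 1, (ln 19 / ln 2). split; [lra|]. split.
  { apply (Rmult_le_reg_r (ln 2)); auto. unfold Rdiv. rewrite Rmult_assoc, Rinv_l; lra. }
  intros n Hn. unfold log2R.
  pose proof (Ncons_ge n) as Hg. pose proof (Ncons_le n Hn) as Hu.
  apply le_INR in Hg, Hu. rewrite pow_INR in Hg, Hu. replace (INR 2) with 2 in Hg by (simpl; lra).
  replace (INR 19) with 19 in Hu by (simpl; lra).
  assert (Hp : 0 < 2 ^ n) by (apply pow_lt; lra).
  split.
  - apply my_ln_le in Hg; [|auto]. rewrite ln_pow in Hg by lra.
    apply (Rmult_le_reg_r (ln 2)); auto.
    replace (ln (INR (Ncons n)) / ln 2 * ln 2) with (ln (INR (Ncons n))) by (field; lra). lra.
  - apply my_ln_le in Hu; [|lra]. rewrite ln_pow in Hu by lra.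
    apply (Rmult_le_reg_r (ln 2)); auto.
    replace (ln (INR (Ncons n)) / ln 2 * ln 2) with (ln (INR (Ncons n))) by (field; lra).
    replace (ln 19 / ln 2 * INR n * ln 2) with (INR n * ln 19) by (field; lra). lra.
Qed.
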